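(* Let $(M,g)$ be a Riemannian manifold and $\mathfrak{X}$ a Killing vector field on $M$. Then at every point $|\mathfrak{X}|^2|\nabla\mathfrak{X}|^2\ge2|\nabla_{\mathfrak{X}}\mathfrak{X}|^2$.
   Context: $|\nabla\mathfrak{X}|^2=\sum_i|\nabla_{e_i}\mathfrak{X}|^2$ for an orthonormal basis $(e_i)$ of the tangent space; $\nabla$ is the Levi-Civita connection of $g$. *)

(* Defs.v *)
(* Local-coordinate model of a Riemannian manifold:
   a chart = an open set U of R^n, with the metric g_{ij} and the vector field
   X given by their component functions in these coordinates. *)
From HB Require Import structures.
From mathcomp Require Import all_boot all_order all_algebra.
From mathcomp Require Import all_classical all_reals all_analysis.
Set Implicit Arguments. Unset Strict Implicit. Unset Printing Implicit Defensive.
Import Order.TTheory GRing.Theory Num.Theory.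
Import numFieldNormedType.Exports.
Local Open Scope classical_set_scope.
Local Open Scope ring_scope.

Section Riemann.
Variables (R : realType) (n : nat).

Definition coord_partial (i : 'I_n) (f : 'rV[R]_n -> R) : 'rV[R]_n -> R :=
  fun x => 'D_(delta_mx 0 i) f x.

Definition iter_partial (s : seq 'I_n) (f : 'rV[R]_n -> R) : 'rV[R]_n -> R :=
  foldr coord_partial f s.

Definition smooth_on (U : set 'rV[R]_n) (f : 'rV[R]_n -> R) : Prop :=
  forall (s : seq 'I_n) (x : 'rV[R]_n), U x -> differentiable (iter_partial s f) x.

Definition ip (G : 'M[R]_n) (u v : 'rV[R]_n) : R :=
  \sum_(i < n) \sum_(j < n) u 0 i * G i j * v 0 j.

Definition riemannian_metric_on (U : set 'rV[R]_n) (g : 'rV[R]_n -> 'M[R]_n) : Prop :=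
  (forall i j, smooth_on U (fun y => g y i j)) /\
  (forall x, U x -> (g x)^T = g x /\
     forall v : 'rV[R]_n, v != 0 -> 0 < ip (g x) v v).

Definition smooth_vector_field_on (U : set 'rV[R]_n) (X : 'rV[R]_n -> 'rV[R]_n) : Prop :=
  forall k, smooth_on U (fun y => X y 0 k).

Definition christoffel (g : 'rV[R]_n -> 'M[R]_n) (x : 'rV[R]_n) (k i j : 'I_n) : R :=
  2^-1 * \sum_(l < n) (invmx (g x)) k l *
    (coord_partial i (fun y => g y j l) x + coord_partial j (fun y => g y i l) x
     - coord_partial l (fun y => g y i j) x).

Definition lc_nabla (g : 'rV[R]_n -> 'M[R]_n) (X : 'rV[R]_n -> 'rV[R]_n)
    (x v : 'rV[R]_n) : 'rV[R]_n :=
  \row_k (\sum_(j < n) v 0 j * coord_partial j (fun y => X y 0 k) x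
          + \sum_(i < n) \sum_(j < n) christoffel g x k i j * v 0 i * X x 0 j).

(* Killing field: Lie derivative L_X g = 0, in coordinates
   X^k d_k g_{ij} + g_{kj} d_i X^k + g_{ik} d_j X^k = 0 *)
Definition killing_on (U : set 'rV[R]_n) (g : 'rV[R]_n -> 'M[R]_n)
    (X : 'rV[R]_n -> 'rV[R]_n) : Prop :=
  forall x, U x -> forall i j : 'I_n,
    \sum_(k < n) (X x 0 k * coord_partial k (fun y => g y i j) x
                  + g x k j * coord_partial i (fun y => X y 0 k) x
                  + g x i k * coord_partial j (fun y => X y 0 k) x) = 0.

Definition orthonormal_basis (G : 'M[R]_n) (E : 'M[R]_n) : Prop :=
  forall i j : 'I_n, ip G (row i E) (row j E) = (i == j)%:R.

End Riemann.

(* Main.v *)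
Require Import Defs.
From HB Require Import structures.
From mathcomp Require Import all_boot all_order all_algebra.
From mathcomp Require Import all_classical all_reals all_analysis.
From mathcomp Require Import ring lra.
Import Order.TTheory GRing.Theory Num.Theory.
Import numFieldNormedType.Exports.
Local Open Scope classical_set_scope.
Local Open Scope ring_scope.

Lemma eucl {R : realFieldType} {n : nat} (B : 'M[R]_n) (c : 'rV[R]_n) :
  B^T = - B ->
  2 * \sum_(i < n) ((c *m B) 0 i)^+2 <=
  (\sum_(k < n) (c 0 k)^+2) * \sum_(i < n) \sum_(j < n) (B i j)^+2.
Proof.
move=> sk.
have skE i j : B j i = - B i j.
  by have := congr1 (fun M : 'M[R]_n => M i j) sk; rewrite /= !mxE.
set y := fun i => (c *m B) 0 i.
have yE i : y i = \sum_j c 0 j * B j i by rewrite /y mxE.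
set s := \sum_(k < n) (c 0 k)^+2.
set Y := \sum_(i < n) (y i)^+2.
set Q := \sum_(i < n) \sum_(j < n) (B i j)^+2.
have s0 : 0 <= s by apply: sumr_ge0 => k _; exact: sqr_ge0.
have cy0 : \sum_j c 0 j * y j = 0.
  set T := \sum_j c 0 j * y j.
  have h1 : T = \sum_j \sum_i c 0 j * c 0 i * B i j.
    by apply: eq_bigr => j _; rewrite yE mulr_sumr; apply: eq_bigr => i _; ring.
  have h2 : T = - T.
    rewrite {1}h1 exchange_big /= h1 -sumrN; apply: eq_bigr => i _.
    rewrite -sumrN; apply: eq_bigr => j _; rewrite skE; ring.
  lra.
have P0 : 0 <= \sum_(j < n) \sum_(i < n) (s * B j i - (c 0 j * y i - y j * c 0 i))^+2.
  by apply: sumr_ge0 => j _; apply: sumr_ge0 => i _; exact: sqr_ge0.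
have e1 : \sum_(j < n) \sum_(i < n) B j i * c 0 j * y i = Y.
  rewrite exchange_big /=; apply: eq_bigr => i _.
  rewrite expr2 yE mulr_suml; apply: eq_bigr => j _; ring.
have e2 : \sum_(j < n) \sum_(i < n) B j i * y j * c 0 i = - Y.
  rewrite -sumrN; apply: eq_bigr => j _.
  rewrite expr2 yE mulr_sumr -sumrN; apply: eq_bigr => i _; rewrite skE; ring.
have e3 : \sum_(j < n) \sum_(i < n) (c 0 j)^+2 * (y i)^+2 = s * Y.
  rewrite /s mulr_suml; apply: eq_bigr => j _; by rewrite mulr_sumr.
have e4 : \sum_(j < n) \sum_(i < n) (y j)^+2 * (c 0 i)^+2 = s * Y.
  rewrite /s mulrC mulr_suml; apply: eq_bigr => j _; by rewrite mulr_sumr.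
have e5 : \sum_(j < n) \sum_(i < n) c 0 j * y i * y j * c 0 i = 0.
  transitivity ((\sum_j c 0 j * y j) * (\sum_i c 0 i * y i)); last by rewrite cy0 mul0r.
  rewrite mulr_suml; apply: eq_bigr => j _; rewrite mulr_sumr; apply: eq_bigr => i _; ring.
have e6 : \sum_(j < n) \sum_(i < n) (B j i)^+2 = Q by [].
have expand t : \sum_(j < n) \sum_(i < n) (t * B j i - (c 0 j * y i - y j * c 0 i))^+2
  = t^+2 * Q - 2 * t * (\sum_(j < n) \sum_(i < n) B j i * c 0 j * y i)
    + 2 * t * (\sum_(j < n) \sum_(i < n) B j i * y j * c 0 i)
    + (\sum_(j < n) \sum_(i < n) (c 0 j)^+2 * (y i)^+2)
    + (\sum_(j < n) \sum_(i < n) (y j)^+2 * (c 0 i)^+2)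
    - 2 * (\sum_(j < n) \sum_(i < n) c 0 j * y i * y j * c 0 i).
  rewrite /Q !mulr_sumr -!sumrN -!big_split /=; apply: eq_bigr => j _.
  rewrite !mulr_sumr -!sumrN -!big_split /=; apply: eq_bigr => i _; ring.
rewrite expand -/Q e1 e2 e3 e4 e5 in P0.
have [s0e|spos] := eqVneq s 0.
  have c0 k : c 0 k = 0.
    apply/eqP; rewrite -sqrf_eq0; apply/eqP.
    by apply: (psumr_eq0P (P := predT) (F := fun k => (c 0 k)^+2)) => // k' _; exact: sqr_ge0.
  have Y0 : Y = 0.
    by apply: big1 => i _; rewrite yE big1 ?expr0n // => k _; rewrite c0 mul0r.
  by rewrite Y0 s0e mulr0 mul0r.
have sp : 0 < s by rewrite lt_neqAle eq_sym spos s0.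
have : 0 <= s * (s * Q - 2 * Y) by rewrite mulrBr; lra.
rewrite pmulr_rge0 //; lra.
Qed.

Lemma rv_sq (R : realFieldType) n (u : 'rV[R]_n) :
  (u *m u^T) 0 0 = \sum_(k < n) (u 0 k)^+2.
Proof. by rewrite mxE; apply: eq_bigr => k _; rewrite mxE expr2. Qed.

Lemma lin_alg (R : realFieldType) n (G E N : 'M[R]_n) (x : 'rV[R]_n) :
  G^T = G -> E *m G *m E^T = 1%:M -> (N *m G)^T = - (N *m G) ->
  2 * ((x *m N) *m G *m (x *m N)^T) 0 0 <=
  (x *m G *m x^T) 0 0 * \sum_(i < n) ((row i E *m N) *m G *m (row i E *m N)^T) 0 0.
Proof.
move=> Gs hE Sk.
have [Eu _] := mulmx1_unit (esym (etrans (esym hE) (esym (mulmxA E G E^T)))).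
set F := invmx E.
have FE : F = G *m E^T.
  by rewrite -[G *m E^T]mul1mx -(mulVmx Eu) -mulmxA (mulmxA E) hE mulmx1.
have GF : G = F *m F^T.
  by rewrite {1}FE -mulmxA -trmx_mul mulVmx // trmx1 mulmx1.
have key u : u *m N *m G *m (u *m N)^T = (u *m N *m F) *m (u *m N *m F)^T.
  by rewrite GF !trmx_mul !mulmxA.
set B := E *m N *m F.
set c := x *m F.
have xE : x = c *m E by rewrite /c -mulmxA mulVmx // mulmx1.
have Bsk : B^T = - B.
  have -> : B = E *m (N *m G) *m E^T by rewrite /B FE !mulmxA.
  by rewrite trmx_mul trmxK trmx_mul Sk mulNmx mulmxN mulmxA.
have hx : (x *m G *m x^T) 0 0 = \sum_(k < n) (c 0 k)^+2.
  rewrite -rv_sq xE.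
  have -> : c *m E *m G *m (c *m E)^T = c *m (E *m G *m E^T) *m c^T.
    by rewrite trmx_mul !mulmxA.
  by rewrite hE mulmx1.
have hxN : ((x *m N) *m G *m (x *m N)^T) 0 0 = \sum_(i < n) ((c *m B) 0 i)^+2.
  by rewrite key -rv_sq xE /B !mulmxA.
have hrow i : ((row i E *m N) *m G *m (row i E *m N)^T) 0 0 = \sum_(j < n) (B i j)^+2.
  rewrite key rv_sq; apply: eq_bigr => j _.
  by rewrite /B -!row_mul mxE.
move: (eucl B c Bsk); rewrite -hx -hxN -(eq_bigr _ (fun i _ => hrow i)).
exact.
Qed.
Lemma ipE (R : realType) n (G : 'M[R]_n) (u v : 'rV[R]_n) :
  ip G u v = (u *m G *m v^T) 0 0.
Proof.
rewrite /ip mxE exchange_big /=; apply: eq_bigr => j _.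
rewrite [v^T j 0]mxE [(u *m G) 0 j]mxE mulr_suml; by apply: eq_bigr => i _.
Qed.

Definition Nmat {R : realType} {n} (g : 'rV[R]_n -> 'M[R]_n) (X : 'rV[R]_n -> 'rV[R]_n)
  (p : 'rV[R]_n) : 'M[R]_n :=
  \matrix_(j, a) (coord_partial j (fun y => X y 0 a) p
                  + \sum_i christoffel g p a j i * X p 0 i).

Lemma lc_nablaE (R : realType) n g X (p v : 'rV[R]_n) :
  lc_nabla g X p v = v *m Nmat g X p.
Proof.
apply/rowP => k; rewrite !mxE -big_split /=; apply: eq_bigr => j _.
rewrite !mxE mulrDr; congr (_ + _); rewrite mulr_sumr; apply: eq_bigr => i _; ring.
Qed.

Lemma Gunit {R : realType} {n} {U : set 'rV[R]_n} {g p} :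
  riemannian_metric_on U g -> U p -> g p \in unitmx.
Proof.
move=> [_ /(_ p) h] Up; have [_ pd] := h Up.
rewrite unitmxE unitfE; apply/negP => /det0P [v v0 vG].
by have := pd v v0; rewrite ipE vG mul0mx mxE ltxx.
Qed.

Lemma Gsym {R : realType} {n} {U : set 'rV[R]_n} {g p} :
  riemannian_metric_on U g -> U p -> forall i j, g p i j = g p j i.
Proof.
move=> [_ /(_ p) h] Up i j; have [s _] := h Up.
by have := congr1 (fun M : 'M[R]_n => M j i) s; rewrite /= mxE.
Qed.

Lemma dsym {R : realType} {n} {U : set 'rV[R]_n} {g p} :
  open U -> riemannian_metric_on U g -> U p ->
  forall i j k, coord_partial k (fun y => g y i j) p = coord_partial k (fun y => g y j i) p.
Proof.
move=> oU rg Up i j k; rewrite /coord_partial; apply: near_eq_derive.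
have : \forall y \near p, U y by apply: open_nbhs_nbhs; split.
by apply: filterS => y Uy; apply: (Gsym rg Uy).
Qed.

Definition Cf {R : realType} {n} (g : 'rV[R]_n -> 'M[R]_n) (p : 'rV[R]_n) (j i b : 'I_n) : R :=
  coord_partial j (fun y => g y i b) p + coord_partial i (fun y => g y j b) p
  - coord_partial b (fun y => g y j i) p.

Lemma contr {R : realType} {n} {U : set 'rV[R]_n} {g p} :
  riemannian_metric_on U g -> U p ->
  forall j i b, \sum_a christoffel g p a j i * g p a b = 2^-1 * Cf g p j i b.
Proof.
move=> rg Up j i b.
have Gu := Gunit rg Up.
have GV := mulmxV Gu.
transitivity (2^-1 * \sum_l Cf g p j i l * (g p *m invmx (g p)) b l).
  rewrite mulr_sumr /christoffel.
  under eq_bigr do rewrite mulr_sumr mulr_suml.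
  rewrite exchange_big /=; apply: eq_bigr => l _.
  rewrite mxE !mulr_sumr; apply: eq_bigr => a _.
  rewrite (Gsym rg Up a b) /Cf; ring.
rewrite GV; congr (_ * _).
rewrite (bigD1 b) //= big1 => [|l nlb]; first by rewrite mxE eqxx mulr1 addr0.
by rewrite mxE eq_sym (negbTE nlb) mulr0.
Qed.

Lemma NGE {R : realType} {n} {U : set 'rV[R]_n} {g X p} :
  riemannian_metric_on U g -> U p ->
  forall j b, (Nmat g X p *m g p) j b =
    \sum_a coord_partial j (fun y => X y 0 a) p * g p a b
    + \sum_i X p 0 i * (2^-1 * Cf g p j i b).
Proof.
move=> rg Up j b; rewrite mxE.
under eq_bigr do rewrite mxE mulrDl.
rewrite big_split /=; congr (_ + _).
under [RHS]eq_bigr do rewrite -(contr rg Up) mulr_sumr.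
rewrite exchange_big /=; apply: eq_bigr => a _.
rewrite mulr_suml; apply: eq_bigr => i _; ring.
Qed.

Lemma NGskew {R : realType} {n} {U : set 'rV[R]_n} {g X p} :
  open U -> riemannian_metric_on U g -> killing_on U g X -> U p ->
  (Nmat g X p *m g p)^T = - (Nmat g X p *m g p).
Proof.
move=> oU rg kil Up; apply/matrixP => b j; rewrite [LHS]mxE [RHS]mxE.
apply/eqP; rewrite -addr_eq0; apply/eqP.
rewrite (NGE rg Up) (NGE rg Up).
rewrite -[RHS](kil p Up j b).
rewrite addrACA -!big_split /=; apply: eq_bigr => k _.
rewrite /Cf (dsym oU rg Up k j b) (dsym oU rg Up b j k) (dsym oU rg Up b k j)
  (Gsym rg Up j k).
by field.
Qed.

Lemma EGE {R : realType} {n} (G E : 'M[R]_n) :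
  orthonormal_basis G E -> E *m G *m E^T = 1%:M.
Proof.
move=> hE; apply/matrixP => i j.
rewrite [RHS]mxE -(hE i j) ipE !mxE; apply: eq_bigr => k _.
by rewrite -row_mul tr_row !mxE.
Qed.

Theorem lemma4p10 (R : realType) (n : nat) (U : set 'rV[R]_n)
    (g : 'rV[R]_n -> 'M[R]_n) (X : 'rV[R]_n -> 'rV[R]_n) :
  open U ->
  riemannian_metric_on U g ->
  smooth_vector_field_on U X ->
  killing_on U g X ->
  forall p : 'rV[R]_n, U p ->
  forall E : 'M[R]_n, orthonormal_basis (g p) E ->
    2 * ip (g p) (lc_nabla g X p (X p)) (lc_nabla g X p (X p))
    <= ip (g p) (X p) (X p) *
       \sum_(i < n) ip (g p) (lc_nabla g X p (row i E)) (lc_nabla g X p (row i E)).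
Proof.
move=> oU rg sX kil p Up E hE.
rewrite !lc_nablaE !ipE.
under eq_bigr do rewrite !lc_nablaE ipE.
apply: lin_alg.
- by have [_ /(_ p Up) []] := rg.
- exact: EGE.
- exact: (NGskew oU rg kil Up).
Qed.
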